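(* Let $m\in\mathbb{N}$, let $(y_k)_{k=1}^m$ be a $1$-unconditional basic sequence and let $\varepsilon>0$. Then there exist $n\in\mathbb{N}$ and a block basis $(x_k)_{k=1}^m$ of the basis $(e_{i,j})_{i,j=1}^n$ of $B(\ell_\infty^n)$ (ordered lexicographically) such that $(x_k)_{k=1}^m$ is $(1+\varepsilon)$-equivalent to $(y_k)_{k=1}^m$, i.e. $(1+\varepsilon)^{-1}\|\sum_k b_ky_k\|\le\|\sum_k b_kx_k\|\le(1+\varepsilon)\|\sum_k b_ky_k\|$ for all scalars $(b_k)$.
   Context: $B(\ell_\infty^n)$ is the $n^2$-dimensional Banach space of linear operators on $\ell_\infty^n$ with the operator norm. With $(f_k)_{k=1}^n$ the unit vector basis of $\ell_\infty^n$, $e_{i,j}$ is the operator with $e_{i,j}(f_k)=f_j$ if $k=i$ and $e_{i,j}(f_k)=0$ otherwise. Then $\|\sum_{i,j=1}^n a_{i,j}e_{i,j}\|=\max_{j\le n}\sum_{i=1}^n|a_{i,j}|$, so $(e_{i,j})$ is a $1$-unconditional basis, ordered lexicographically as $e_{11},e_{12},\dots,e_{1n},e_{21},\dots,e_{nn}$. *)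

(* Defs.v *)
From HB Require Import structures.
From mathcomp Require Import all_boot all_order all_algebra.
From mathcomp Require Import all_classical all_reals all_analysis.
Set Implicit Arguments. Unset Strict Implicit. Unset Printing Implicit Defensive.
Import Order.TTheory GRing.Theory Num.Theory.
Import numFieldNormedType.Exports.
Local Open Scope ring_scope.

(* An element of B(l_infty^n) is given by its coefficients A i j w.r.t. the
   basis (e_{i,j}); its norm is max_j sum_i |a_{i,j}|. *)
Definition Bnorm (R : realType) (n : nat) (A : 'M[R]_n) : R :=
  \big[Num.max/0]_(j < n) \sum_(i < n) `|A i j|.

Definition lexpos (n : nat) (i j : 'I_n) : nat := (i * n + j)%N.

Definition is_block_basis (R : realType) (n m : nat) (x : 'I_m -> 'M[R]_n) : Prop :=
  (forall k, x k != 0) /\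
  (forall (k l : 'I_m) (i j i' j' : 'I_n), (k < l)%N ->
     x k i j != 0 -> x l i' j' != 0 -> (lexpos i j < lexpos i' j')%N).

Definition is_basic_seq (R : realType) (V : normedModType R) (m : nat)
  (y : 'I_m -> V) : Prop :=
  forall b : 'I_m -> R, \sum_(k < m) b k *: y k = 0 -> forall k, b k = 0.

Definition one_unconditional (R : realType) (V : normedModType R) (m : nat)
  (y : 'I_m -> V) : Prop :=
  forall (b : 'I_m -> R) (s : 'I_m -> bool),
    `| \sum_(k < m) ((-1) ^+ s k * b k) *: y k | = `| \sum_(k < m) b k *: y k |.

(* Main.v *)
From HB Require Import structures.
From mathcomp Require Import all_boot all_order all_algebra.
From mathcomp Require Import all_classical all_reals all_analysis.
From mathcomp Require Import ring lra zify.
Import Order.TTheory GRing.Theory Num.Theory.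
Import numFieldNormedType.Exports.
Set Implicit Arguments. Unset Strict Implicit. Unset Printing Implicit Defensive.
Local Open Scope ring_scope.

Definition sublin (R : realType) (V : lmodType R) (q : V -> R) :=
  (forall x y, q (x + y) <= q x + q y) /\ (forall t x, 0 <= t -> q (t *: x) = t * q x).

Definition gT (R : realType) (V : lmodType R) (q : V -> R) v x (t : R) :=
  q (x + t *: v) - t * q v.

Definition Tset (R : realType) (V : lmodType R) (q : V -> R) v x : set R :=
  [set r | exists t, 0 <= t /\ r = gT q v x t].

Definition Top (R : realType) (V : lmodType R) (q : V -> R) v x := inf (Tset q v x).

Definition lin_along (R : realType) (V : lmodType R) (q : V -> R) w :=
  forall x s, q (x + s *: w) = q x + s * q w.

Lemma sub0 (R : realType) (V : lmodType R) (q : V -> R) : sublin q -> q 0 = 0.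
Proof. by case=> _ H; rewrite -(scale0r (0:V)) H // mul0r. Qed.

Lemma gT_lb (R : realType) (V : lmodType R) (q : V -> R) v x t :
  sublin q -> 0 <= t -> - q (- x) <= gT q v x t.
Proof.
move=> [Ha Hh] t0; rewrite /gT -Hh //.
have := Ha (x + t *: v) (- x); rewrite addrC addKr => h.
by rewrite lerBrDr addrC -lerBrDr opprK.
Qed.

Lemma Top_le (R : realType) (V : lmodType R) (q : V -> R) v x t :
  sublin q -> 0 <= t -> Top q v x <= gT q v x t.
Proof.
move=> sq t0; apply: ge_inf; last by exists t.
exists (- q (- x)) => r [s [s0 ->]]; exact: gT_lb.
Qed.

Lemma le_Top (R : realType) (V : lmodType R) (q : V -> R) v x z :
  (forall t, 0 <= t -> z <= gT q v x t) -> z <= Top q v x.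
Proof.
move=> H; apply: lb_le_inf; first by exists (gT q v x 0), 0.
by move=> r [t [t0 ->]]; exact: H.
Qed.

Lemma Top_leq (R : realType) (V : lmodType R) (q : V -> R) v x :
  sublin q -> Top q v x <= q x.
Proof.
move=> sq; have := Top_le v x sq (lexx 0).
by rewrite /gT scale0r addr0 mul0r subr0.
Qed.

Lemma gT_mono (R : realType) (V : lmodType R) (q : V -> R) v x t u :
  sublin q -> 0 <= u -> gT q v x (t + u) <= gT q v x t.
Proof.
move=> [Ha Hh] u0; rewrite /gT scalerDl addrA mulrDl.
have := Ha (x + t *: v) (u *: v); rewrite Hh // => h.
lra.
Qed.

Lemma Top0 (R : realType) (V : lmodType R) (q : V -> R) v :
  sublin q -> Top q v 0 = 0.
Proof.
move=> sq; apply/eqP; rewrite eq_le; apply/andP; split.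
  have := Top_le v 0 sq (lexx 0).
  by rewrite /gT scale0r addr0 mul0r subr0 (sub0 sq).
apply: le_Top => t t0; rewrite /gT add0r.
by case: sq => _ Hh; rewrite Hh // subrr.
Qed.

Lemma Top_sub (R : realType) (V : lmodType R) (q : V -> R) v :
  sublin q -> sublin (Top q v).
Proof.
move=> sq; have [Ha Hh] := sq; split.
  move=> x y.
  have H1 : forall t s, 0 <= t -> 0 <= s ->
      Top q v (x + y) <= gT q v x t + gT q v y s.
    move=> t s t0 s0; apply: (le_trans (Top_le v (x + y) sq (addr_ge0 t0 s0))).
    rewrite /gT.
    have e : x + y + (t + s) *: v = (x + t *: v) + (y + s *: v).
      by rewrite scalerDl addrACA.
    rewrite e; have := Ha (x + t *: v) (y + s *: v); lra.
  have H2 : forall s, 0 <= s -> Top q v (x + y) - gT q v y s <= Top q v x.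
    move=> s s0; apply: le_Top => t t0; have := H1 t s t0 s0; lra.
  have : Top q v (x + y) - Top q v x <= Top q v y.
    apply: le_Top => s s0; have := H2 s s0; lra.
  lra.
move=> t x; rewrite le_eqVlt => /orP [/eqP <-|t0].
  by rewrite scale0r mul0r Top0.
apply/eqP; rewrite eq_le; apply/andP; split.
  suff : Top q v (t *: x) / t <= Top q v x by rewrite ler_pdivrMr // mulrC.
  apply: le_Top => s s0; rewrite ler_pdivrMr //.
  have := Top_le v (t *: x) sq (mulr_ge0 (ltW t0) s0).
  have e : t *: x + (t * s) *: v = t *: (x + s *: v) by rewrite scalerDr scalerA.
  rewrite /gT e Hh; last exact: ltW.
  rewrite mulrBl. nra.
apply: le_Top => s s0.
have h := Top_le v x sq (divr_ge0 s0 (ltW t0)).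
have h' := ler_wpM2l (ltW t0) h.
have e : t *: (x + (s / t) *: v) = t *: x + s *: v.
  by rewrite scalerDr scalerA mulrC divfK // gt_eqF.
move: h'; rewrite /gT -e Hh; last exact: ltW.
by rewrite mulrBr mulrA [t * (s / t)]mulrC divfK // gt_eqF.
Qed.

Lemma Top_self (R : realType) (V : lmodType R) (q : V -> R) v :
  sublin q -> forall x s, Top q v (x + s *: v) = Top q v x + s * q v.
Proof.
move=> sq.
have S1 : forall x s, Top q v (x + s *: v) <= Top q v x + s * q v.
  move=> x s.
  suff : Top q v (x + s *: v) - s * q v <= Top q v x by lra.
  apply: le_Top => t t0.
  pose t' := Num.max 0 (t - s).
  have t'0 : 0 <= t' by rewrite le_max lexx.
  have t'1 : t - s <= t' by rewrite le_max lexx orbT.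
  have h1 := Top_le v (x + s *: v) sq t'0.
  have h2 := gT_mono v x t sq (_ : 0 <= s + t' - t).
  have e : t + (s + t' - t) = s + t' by rewrite addrC subrK.
  have := h2 ltac:(lra); rewrite e.
  move: h1; rewrite /gT -addrA -scalerDl; lra.
move=> x s; apply/eqP; rewrite eq_le S1 /=.
have := S1 (x + s *: v) (- s).
by rewrite scaleNr addrK; lra.
Qed.

Lemma Top_other (R : realType) (V : lmodType R) (q : V -> R) v w :
  sublin q -> lin_along q w ->
  forall x s, Top q v (x + s *: w) = Top q v x + s * q w.
Proof.
move=> sq lw.
have S1 : forall x s, Top q v (x + s *: w) <= Top q v x + s * q w.
  move=> x s.
  suff : Top q v (x + s *: w) - s * q w <= Top q v x by lra.
  apply: le_Top => t t0.
  have := Top_le v (x + s *: w) sq t0.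
  rewrite /gT addrAC lw; lra.
move=> x s; apply/eqP; rewrite eq_le S1 /=.
have := S1 (x + s *: w) (- s).
by rewrite scaleNr addrK; lra.
Qed.

Lemma Top_val_self (R : realType) (V : lmodType R) (q : V -> R) v :
  sublin q -> Top q v v = q v.
Proof.
move=> sq; have := @Top_self _ _ q v sq 0 1.
by rewrite add0r scale1r Top0 // mul1r add0r.
Qed.

Lemma Top_val_other (R : realType) (V : lmodType R) (q : V -> R) v w :
  sublin q -> lin_along q w -> Top q v w = q w.
Proof.
move=> sq lw; have := @Top_other _ _ q v w sq lw 0 1.
by rewrite add0r scale1r Top0 // mul1r add0r.
Qed.

Lemma lin_Top_self (R : realType) (V : lmodType R) (q : V -> R) v :
  sublin q -> lin_along (Top q v) v.
Proof. by move=> sq x s; rewrite Top_self // Top_val_self. Qed.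

Lemma lin_Top_other (R : realType) (V : lmodType R) (q : V -> R) v w :
  sublin q -> lin_along q w -> lin_along (Top q v) w.
Proof. by move=> sq lw x s; rewrite Top_other // (Top_val_other v sq lw). Qed.

Definition Qs (R : realType) (V : lmodType R) (p : V -> R) c (l : seq V) :=
  foldr (fun v q => Top q v) (Top p c) l.

Lemma Qs_props (R : realType) (V : lmodType R) (p : V -> R) c l :
  sublin p ->
  [/\ sublin (Qs p c l), (forall x, Qs p c l x <= p x), Qs p c l c = p c,
      lin_along (Qs p c l) c & (forall w, w \in l -> lin_along (Qs p c l) w)].
Proof.
move=> sp; elim: l => [|v l [s1 s2 s3 s4 s5]] /=.
  split; first exact: Top_sub.
  - by move=> x; exact: Top_leq.
  - exact: Top_val_self.
  - exact: lin_Top_self.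
  - by [].
split; first exact: Top_sub.
- by move=> x; apply: le_trans (Top_leq _ _ s1) (s2 x).
- by rewrite (Top_val_other _ s1 s4).
- exact: lin_Top_other.
- move=> w; rewrite inE => /orP [/eqP ->|wl]; first exact: lin_Top_self.
  by apply: lin_Top_other => //; exact: s5.
Qed.

Lemma lin_rep (R : realType) (m : nat) (Q : 'rV[R]_m -> R) :
  sublin Q -> (forall k, lin_along Q 'e_k) ->
  forall x, Q x = \sum_(k < m) x 0 k * Q 'e_k.
Proof.
move=> sQ H x; rewrite {1}(row_sum_delta x).
elim: (index_enum _) => [|j s IH]; first by rewrite !big_nil sub0.
by rewrite !big_cons addrC H IH addrC.
Qed.

Lemma HB_row (R : realType) (m : nat) (p : 'rV[R]_m -> R) (c : 'rV[R]_m) :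
  sublin p -> exists f : 'I_m -> R,
    (forall x : 'rV[R]_m, \sum_(k < m) x 0 k * f k <= p x) /\ \sum_(k < m) c 0 k * f k = p c.
Proof.
move=> sp.
have [s1 s2 s3 s4 s5] := Qs_props c [seq 'e_k | k <- enum 'I_m] sp.
set Q := Qs _ _ _ in s1 s2 s3 s4 s5.
have lr := lin_rep s1 (fun k => s5 _ (map_f _ (mem_enum _ k))).
exists (fun k => Q 'e_k); split; first by move=> x; rewrite -lr.
by rewrite -lr.
Qed.

Require Import Defs.
Definition Nf (R : realType) (V : normedModType R) (m : nat) (y : 'I_m -> V)
  (b : 'I_m -> R) : R := `| \sum_(k < m) b k *: y k |.

Lemma Nf_ge0 (R : realType) (V : normedModType R) (m : nat) (y : 'I_m -> V) b :
  0 <= Nf y b.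
Proof. exact: normr_ge0. Qed.

Lemma Nf_hom (R : realType) (V : normedModType R) (m : nat) (y : 'I_m -> V) b t :
  Nf y (fun k => t * b k) = `|t| * Nf y b.
Proof.
rewrite /Nf -normrZ scaler_sumr; congr `|_|; apply: eq_bigr => k _.
by rewrite scalerA.
Qed.

Lemma Nf_tri (R : realType) (V : normedModType R) (m : nat) (y : 'I_m -> V) b c :
  Nf y b <= Nf y c + \sum_(k < m) `|y k| * `|b k - c k|.
Proof.
rewrite /Nf.
have -> : \sum_(k < m) b k *: y k =
   \sum_(k < m) c k *: y k + \sum_(k < m) (b k - c k) *: y k.
  by rewrite -big_split /=; apply: eq_bigr => k _; rewrite -scalerDl addrC subrK.
apply: (le_trans (ler_normD _ _)); rewrite lerD2l.
apply: (le_trans (ler_norm_sum _ _ _)); apply: ler_sum => k _.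
by rewrite normrZ mulrC.
Qed.

Lemma Nf_abs (R : realType) (V : normedModType R) (m : nat) (y : 'I_m -> V) b :
  one_unconditional y -> Nf y (fun k => `|b k|) = Nf y b.
Proof.
move=> U; rewrite /Nf -(U b (fun k => b k < 0)); congr `|_|.
apply: eq_bigr => k _; congr (_ *: _).
case: ltP => h; first by rewrite expr1 mulN1r ltr0_norm.
by rewrite expr0 mul1r ger0_norm.
Qed.

Lemma Nf_mono (R : realType) (V : normedModType R) (m : nat) (y : 'I_m -> V) b j :
  one_unconditional y -> `|b j| * `|y j| <= Nf y b.
Proof.
move=> U.
have e : \sum_(k < m) ((-1) ^+ (k != j) * b k) *: y k + \sum_(k < m) b k *: y k
     = (b j + b j) *: y j.
  rewrite -big_split /= (bigD1 j) //= big1 ?addr0.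
    by rewrite eqxx expr0 mul1r scalerDl.
  by move=> k kj; rewrite kj expr1 mulN1r -scalerDl addNr scale0r.
have := ler_normD (\sum_(k < m) ((-1) ^+ (k != j) * b k) *: y k)
                  (\sum_(k < m) b k *: y k).
rewrite e U normrZ -mulr2n -mulr_natr normrM (ger0_norm (ler0n _ 2)) /Nf.
have := normr_ge0 (y j); have := normr_ge0 (b j); nra.
Qed.

Lemma y_neq0 (R : realType) (V : normedModType R) (m : nat) (y : 'I_m -> V) k :
  is_basic_seq y -> y k != 0.
Proof.
move=> B; apply/eqP => yk.
have := B (fun l => (l == k)%:R).
rewrite (bigD1 k) //= big1 ?eqxx ?scale1r ?addr0 ?yk => [/(_ erefl k)|].
  by move/eqP; rewrite eqxx oner_eq0.
by move=> l /negPf ->; rewrite scale0r.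
Qed.

Lemma Nf_sublin (R : realType) (V : normedModType R) (m : nat) (y : 'I_m -> V) :
  sublin (fun x : 'rV[R]_m => Nf y (fun k => x 0 k)).
Proof.
split.
  move=> x z; rewrite /Nf.
  have -> : \sum_(k < m) (x + z) 0 k *: y k =
     \sum_(k < m) x 0 k *: y k + \sum_(k < m) z 0 k *: y k.
    by rewrite -big_split /=; apply: eq_bigr => k _; rewrite mxE scalerDl.
  exact: ler_normD.
move=> t x t0 /=.
rewrite -[in RHS](ger0_norm t0) -Nf_hom.
congr (Nf y _).
by apply: funext => k; rewrite mxE.
Qed.

Lemma func_exists (R : realType) (V : normedModType R) (m : nat) (y : 'I_m -> V)
  (c : 'I_m -> R) : one_unconditional y ->
  exists a : 'I_m -> R, (forall k, 0 <= a k) /\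
    (forall b, \sum_(k < m) a k * `|b k| <= Nf y b) /\
    Nf y c <= \sum_(k < m) a k * `|c k|.
Proof.
move=> U.
have [f [f1 f2]] := HB_row (\row_k `|c k|) (Nf_sublin y).
exists (fun k => `|f k|); split; first by move=> k; exact: normr_ge0.
split.
  move=> b.
  have := f1 (\row_k ((-1) ^+ (f k * b k < 0)%R * b k)).
  have -> : (fun k => (\row_k0 ((-1) ^+ (f k0 * b k0 < 0)%R * b k0)) 0 k) =
            (fun k => (-1) ^+ (f k * b k < 0)%R * b k).
    by apply: funext => k; rewrite mxE.
  have -> : Nf y (fun k => (-1) ^+ (f k * b k < 0)%R * b k) = Nf y b.
    exact: (U b (fun k => (f k * b k < 0)%R)).
  apply: le_trans; rewrite le_eqVlt; apply/orP; left; apply/eqP.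
  apply: eq_bigr => k _; rewrite mxE -normrM.
  case: ltP => h; first by rewrite expr1 mulN1r ltr0_norm // mulNr mulrC.
  by rewrite expr0 mul1r ger0_norm // mulrC.
have e : (fun k => (\row_k0 `|c k0|) 0 k) = (fun k => `|c k|).
  by apply: funext => k; rewrite mxE.
rewrite e in f2; rewrite -Nf_abs // -f2.
apply: ler_sum => k _; rewrite mxE mulrC ler_wpM2r //; exact: ler_norm.
Qed.

Lemma grid_err (R : realType) (t ny bk G K : R) :
  0 < t -> 0 < ny -> 0 < K -> G <= K * (bk * ny / t) < G + 1 ->
  0 <= bk - t * (G / (K * ny)) /\ ny * (bk - t * (G / (K * ny))) <= t / K.
Proof.
move=> t0 ny0 K0 /andP [h1 h2].
have e : ny * (bk - t * (G / (K * ny))) = (t / K) * (K * (bk * ny / t) - G).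
  by field; rewrite ?gt_eqF.
have tK : 0 < t / K by rewrite divr_gt0.
have h3 : 0 <= ny * (bk - t * (G / (K * ny))) by rewrite e mulr_ge0 //; lra.
split; first by move: h3; rewrite pmulr_rge0.
rewrite e; move: h1 h2 tK; set u := K * _; nra.
Qed.

Lemma final_ineq (R : realType) (N t M K e : R) :
  0 < e -> 0 <= N -> 0 <= t -> t <= M * N -> 0 < K -> M * M * (1 + e) <= K * e ->
  0 <= M -> (1 + e)^-1 * N <= N - M * t / K.
Proof.
move=> e0 N0 t0 tM K0 KE M0.
rewrite ler_pdivrMl; last lra.
set s := M * t / K.
have hs : s * K = M * t by rewrite /s divfK // gt_eqF.
have h1 : (1 + e) * M * t <= (1 + e) * M * (M * N).
  by rewrite -mulrA -[X in _ <= X]mulrA ler_wpM2l //; [nra| rewrite ler_wpM2l].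
nra.
Qed.

Unset Implicit Arguments.

Theorem proposition2p2 (R : realType) (V : normedModType R) (m : nat)
  (y : 'I_m -> V) (eps : R) :
  is_basic_seq y -> one_unconditional y -> 0 < eps ->
  exists (n : nat) (x : 'I_m -> 'M[R]_n),
    is_block_basis x /\
    forall b : 'I_m -> R,
      (1 + eps)^-1 * `| \sum_(k < m) b k *: y k |
        <= Bnorm (\sum_(k < m) b k *: x k) /\
      Bnorm (\sum_(k < m) b k *: x k) <= (1 + eps) * `| \sum_(k < m) b k *: y k |.
Proof.
move=> B U e0.
pose ny k := `|y k|.
have ny0 : forall k, 0 < ny k by move=> k; rewrite normr_gt0 y_neq0.
pose M : R := m%:R.
pose K := (Num.truncn (M * M * (1 + eps) / eps)).+1.
have Kgt : M * M * (1 + eps) / eps < K%:R := truncnS_gt _.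
have KE : M * M * (1 + eps) <= K%:R * eps.
  by move: Kgt; rewrite ltr_pdivrMr // => /ltW.
have K0 : 0 < K%:R :> R by rewrite ltr0n.
pose G := {ffun 'I_m -> 'I_K.+1}.
pose NG := #|G|.
pose cg (g : G) := fun k => ((g k : nat)%:R / (K%:R * ny k) : R).
pose afun c := proj1_sig (cid (@func_exists R V m y c U)).
have afunP : forall c, (forall k, 0 <= afun c k) /\
    (forall b, \sum_(k < m) afun c k * `|b k| <= Nf y b) /\
    Nf y c <= \sum_(k < m) afun c k * `|c k|.
  by move=> c; exact: (proj2_sig (cid (@func_exists R V m y c U))).
pose w (j : 'I_(m + NG)) (k : 'I_m) : R :=
  match fintype.split j with inl l => if l == k then ny k else 0
                   | inr g => afun (cg (enum_val g)) k end.
have w0 : forall j k, 0 <= w j k.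
  move=> j k; rewrite /w; case: (fintype.split j) => [l|g].
    by case: eqP => _ //; exact: ltW.
  by case: (afunP (cg (enum_val g))) => h _; exact: h.
have wA : forall j b, \sum_(k < m) w j k * `|b k| <= Nf y b.
  move=> j b; rewrite /w; case: (fintype.split j) => [l|g].
    rewrite (bigD1 l) //= eqxx big1 ?addr0 => [|k kl]; last first.
      by rewrite eq_sym (negPf kl) mul0r.
    by rewrite mulrC; exact: Nf_mono.
  by case: (afunP (cg (enum_val g))) => _ [h _]; exact: h.
pose X := fun k : 'I_m => (\matrix_(i, j) (if i == lshift NG k then w j k else 0)
   : 'M[R]_(m + NG)).
exists (m + NG)%N, X; split.
  split.
    move=> k; apply/eqP => h.
    have := congr1 (fun A : 'M[R]_(m + NG) => A (lshift NG k) (lshift NG k)) h.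
    rewrite !mxE eqxx /w (unsplitK (inl _ k)) eqxx.
    by move/eqP; rewrite (gt_eqF (ny0 k)).
  move=> k l i j i' j' kl; rewrite !mxE.
  case: (i =P lshift NG k) => [-> _|_]; last by rewrite eqxx.
  case: (i' =P lshift NG l) => [-> _|_]; last by rewrite eqxx.
  rewrite /lexpos /=; have := ltn_ord j; have := ltn_ord j'; nia.
move=> b.
pose S j := \sum_(k < m) w j k * `|b k|.
have col : Bnorm (\sum_(k < m) b k *: X k) = \big[Num.max/0]_(j < m + NG) S j.
  rewrite /Bnorm; apply: eq_bigr => j _.
  rewrite big_split_ord /= [X in _ + X]big1 ?addr0 => [|i _]; last first.
    rewrite summxE big1 ?normr0 // => k _.
    by rewrite !mxE eq_rlshift mulr0.
  apply: eq_bigr => i _.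
  rewrite summxE (bigD1 i) //= !mxE eqxx big1 ?addr0 => [|k ki]; last first.
    by rewrite !mxE eq_lshift eq_sym (negPf ki) mulr0.
  by rewrite normrM (ger0_norm (w0 _ _)) mulrC.
rewrite col -/(Nf y b); split; last first.
  apply: bigmax_le => [|j _]; first by rewrite mulr_ge0 ?Nf_ge0 //; lra.
  apply: le_trans (wA j b) _; have := Nf_ge0 y b; nra.
pose t := \sum_(k < m) `|b k| * ny k.
pose g : G := [ffun k => inord (Num.truncn (K%:R * (`|b k| * ny k / t)))].
pose j0 := rshift m (enum_rank g).
apply: (le_trans _ (le_bigmax _ _ j0)).
have Sj0 : S j0 = \sum_(k < m) afun (cg g) k * `|b k|.
  by rewrite /S /w /j0 (unsplitK (inr _ (enum_rank g))) enum_rankK.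
have [aP0 [aP1 aP2]] := afunP (cg g).
have t0 : 0 <= t by apply: sumr_ge0 => k _; rewrite mulr_ge0 // ltW.
have Nt : Nf y b <= t.
  have N00 : Nf y (fun _ => 0) = 0.
    by rewrite /Nf big1 ?normr0 // => k _; rewrite scale0r.
  have := Nf_tri y b (fun _ => 0).
  rewrite N00 add0r => h; apply: (le_trans h); apply: ler_sum => k _.
  by rewrite subr0 mulrC.
have N0 := Nf_ge0 y b.
have S0 : 0 <= S j0 by rewrite Sj0 sumr_ge0 // => k _; rewrite mulr_ge0.
move: t0; rewrite le_eqVlt => /orP [/eqP t0|t0].
  have -> : Nf y b = 0 by apply/eqP; rewrite eq_le N0 andbT t0.
  by rewrite mulr0.
have tm : t <= M * Nf y b.
  rewrite /t (le_trans (ler_sum _ (fun k _ => Nf_mono b k U))) //.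
  by rewrite sumr_const card_ord mulr_natl.
have gerr : forall k, 0 <= `|b k| - t * cg g k /\
    ny k * (`|b k| - t * cg g k) <= t / K%:R.
  move=> k.
  have uk1 : `|b k| * ny k / t <= 1.
    rewrite ler_pdivrMr // mul1r /t (bigD1 k) //= lerDl.
    by apply: sumr_ge0 => l _; rewrite mulr_ge0 // ltW.
  have uk0 : 0 <= K%:R * (`|b k| * ny k / t).
    by rewrite mulr_ge0 ?ler0n // divr_ge0 ?mulr_ge0 ?normr_ge0 ?(ltW (ny0 k)) ?(ltW t0).
  have gk : (g k : nat) = Num.truncn (K%:R * (`|b k| * ny k / t)).
    rewrite ffunE inordK // ltnS truncn_le_nat.
    have : K%:R * (`|b k| * ny k / t) <= K%:R :> R.
      by rewrite ler_piMr // ltW.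
    by move=> h; apply: (le_lt_trans h); rewrite ltr_nat.
  have itv := truncn_itv uk0.
  move: itv; rewrite -gk -natr1 => itv.
  exact: (grid_err t0 (ny0 k) K0 itv).
pose d := fun k => t * cg g k.
have h1 : \sum_(k < m) afun (cg g) k * d k <= S j0.
  rewrite Sj0; apply: ler_sum => k _; rewrite ler_wpM2l //.
  by case: (gerr k) => h _; rewrite /d; lra.
have cg0 : forall k, 0 <= cg g k.
  by move=> k; rewrite /cg divr_ge0 // mulr_ge0 // ltW.
have h2 : Nf y d <= \sum_(k < m) afun (cg g) k * d k.
  rewrite /d Nf_hom (ger0_norm (ltW t0)).
  have -> : \sum_(k < m) afun (cg g) k * (t * cg g k) =
            t * \sum_(k < m) afun (cg g) k * `|cg g k|.
    rewrite mulr_sumr; apply: eq_bigr => k _.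
    by rewrite ger0_norm // mulrCA.
  by rewrite ler_pM2l.
have h3 : Nf y b <= Nf y d + M * t / K%:R.
  rewrite -Nf_abs //; apply: (le_trans (Nf_tri _ _ d)); rewrite lerD2l.
  have -> : M * t / K%:R = \sum_(k < m) t / K%:R.
    by rewrite sumr_const card_ord -mulrA /M mulr_natl.
  apply: ler_sum => k _; case: (gerr k) => ha hb.
  by rewrite ger0_norm.
have := final_ineq e0 N0 (ltW t0) tm K0 KE (ler0n _ m).
move=> h; apply: (le_trans h); lra.
Qed.
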